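(* Let $\lambda_1\ge\lambda_2\ge\dots\ge\lambda_r>0$ satisfy $\lambda_i\le\chi\lambda_{i+1}$ for all $i\in[r-1]$, for some $\chi>1$. Let $\eta>0$ and let $\gamma_0,\gamma_1,\dots>0$ be such that $\eta\gamma_j\lambda_1<1$ for all $j$. For $t\ge0$ and $i\in[r]$ define $P_i(t)=\prod_{j=0}^{t-1}(1-\eta\gamma_j\lambda_i)$. Fix $a_1\in(0,1)$ and set $a_2=e^{(a_1-1)/\chi}$. (a) For every $t$ and every $i\in[r-1]$: if $P_i(t)<a_1$, then $P_{i+1}(t)<a_2$. (b) Consequently, if $P_1(t)<a_2$ and $P_r(t)\ge a_1$, then there exists $i\in[r]$ with $a_1\le P_i(t)\le a_2$. In particular, (b) holds for all $t$ in the interval $[t_1,t_2)$, where $t_1$ is the first iteration with $P_1(t)<a_2$ and $t_2$ is the first iteration with $P_r(t)<a_1$.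
   Context: In the paper this is applied with $\gamma_j\lambda_i=\lambda_i(\tilde M(j))=v_i^\top\tilde M(j)v_i$. Here $\tilde M(j)=\gamma_jX^\top X$ with $\gamma_j>0$, and the $\lambda_i$ are the nonzero eigenvalues of $X^\top X$. *)

(* Defs.v *)
From Stdlib Require Import Reals.
Open Scope R_scope.

Fixpoint prodR (f : nat -> R) (t : nat) : R :=
  match t with
  | O => 1
  | S t' => prodR f t' * f t'
  end.

Definition Pfun (eta : R) (gamma : nat -> R) (lambda : nat -> R) (i t : nat) : R :=
  prodR (fun j => 1 - eta * gamma j * lambda i) t.

(* Main.v *)
Require Import Defs.
From Stdlib Require Import Reals Lra Lia.
Open Scope R_scope.

Fixpoint sumR (f : nat -> R) (t : nat) : R :=
  match t with O => 0 | S t' => sumR f t' + f t' end.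

Lemma prod_01 (x : nat -> R) t : (forall j, 0 <= x j <= 1) ->
  0 <= prodR (fun j => 1 - x j) t <= 1.
Proof.
  intros H; induction t as [|t IH]; simpl; [lra|].
  specialize (H t). split; [apply Rmult_le_pos; [apply IH|lra]|].
  destruct IH; nra.
Qed.

Lemma prod_weier (x : nat -> R) t : (forall j, 0 <= x j <= 1) ->
  1 - sumR x t <= prodR (fun j => 1 - x j) t.
Proof.
  intros H; induction t as [|t IH]; simpl; [lra|].
  pose proof (prod_01 x t H). specialize (H t).
  set (p := prodR _ t) in *.
  assert (p * x t <= x t).
  { replace (x t) with (1 * x t) at 2 by ring. apply Rmult_le_compat_r; lra. }
  nra.
Qed.

Lemma prod_exp (y : nat -> R) t : (forall j, 0 <= y j <= 1) ->
  prodR (fun j => 1 - y j) t <= exp (- sumR y t).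
Proof.
  intros H; induction t as [|t IH]; simpl.
  - rewrite Ropp_0, exp_0; lra.
  - pose proof (prod_01 y t H). specialize (H t).
    replace (- (sumR y t + y t)) with (- sumR y t + - y t) by ring.
    rewrite exp_plus.
    assert (1 - y t <= exp (- y t)) by (pose proof (exp_ineq1_le (- y t)); lra).
    apply Rmult_le_compat; lra.
Qed.

Lemma sum_le (x y : nat -> R) t : (forall j, x j <= y j) -> sumR x t <= sumR y t.
Proof. intros H; induction t; simpl; [lra|]. specialize (H t). lra. Qed.

Lemma sum_scal (x : nat -> R) c t : sumR (fun j => x j * c) t = sumR x t * c.
Proof. induction t; simpl; [ring|]. rewrite IHt; ring. Qed.

Lemma prod_mono (x : nat -> R) t d : (forall j, 0 <= x j <= 1) ->
  prodR (fun j => 1 - x j) (t + d) <= prodR (fun j => 1 - x j) t.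
Proof.
  intros H; induction d as [|d IH].
  - rewrite Nat.add_0_r; lra.
  - rewrite Nat.add_succ_r; simpl.
    pose proof (prod_01 x (t + d) H) as H0. specialize (H (t + d)%nat).
    apply Rle_trans with (prodR (fun j => 1 - x j) (t + d)); [|exact IH]. destruct H0; nra.
Qed.

Theorem mainTheorem4 (r : nat) (lambda : nat -> R) (chi eta a1 : R)
  (gamma : nat -> R)
  (hr : (1 <= r)%nat)
  (hmono : forall i : nat, (1 <= i)%nat -> (i < r)%nat -> lambda (S i) <= lambda i)
  (hpos : 0 < lambda r)
  (hchi : 1 < chi)
  (hratio : forall i : nat, (1 <= i)%nat -> (i < r)%nat -> lambda i <= chi * lambda (S i))
  (heta : 0 < eta)
  (hgamma : forall j : nat, 0 < gamma j)
  (hstep : forall j : nat, eta * gamma j * lambda 1%nat < 1)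
  (ha1 : 0 < a1 < 1) :
  let a2 := exp ((a1 - 1) / chi) in
  let P := Pfun eta gamma lambda in
  (* (a) *)
  (forall (t i : nat), (1 <= i)%nat -> (i < r)%nat ->
      P i t < a1 -> P (S i) t < a2) /\
  (* (b) *)
  (forall t : nat, P 1%nat t < a2 -> a1 <= P r t ->
      exists i : nat, (1 <= i <= r)%nat /\ a1 <= P i t <= a2) /\
  (* in particular: for all t in [t1, t2) *)
  (forall t1 t2 : nat,
      (P 1%nat t1 < a2 /\ forall s : nat, (s < t1)%nat -> a2 <= P 1%nat s) ->
      (P r t2 < a1 /\ forall s : nat, (s < t2)%nat -> a1 <= P r s) ->
      forall t : nat, (t1 <= t)%nat -> (t < t2)%nat ->
        exists i : nat, (1 <= i <= r)%nat /\ a1 <= P i t <= a2).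
Proof.
  intros a2 P.
  assert (Hdec : forall d i, (1 <= i)%nat -> (i + d <= r)%nat -> lambda (i + d)%nat <= lambda i).
  { induction d as [|d IH]; intros i Hi Hid.
    - rewrite Nat.add_0_r; lra.
    - rewrite Nat.add_succ_r.
      pose proof (hmono (i + d)%nat ltac:(lia) ltac:(lia)).
      pose proof (IH i Hi ltac:(lia)). lra. }
  assert (Hle1 : forall i, (1 <= i <= r)%nat -> lambda i <= lambda 1%nat).
  { intros i Hi. replace i with (1 + (i - 1))%nat by lia. apply Hdec; lia. }
  assert (Hgt0 : forall i, (1 <= i <= r)%nat -> 0 < lambda i).
  { intros i Hi. pose proof (Hdec (r - i)%nat i ltac:(lia) ltac:(lia)).
    replace (i + (r - i))%nat with r in H by lia. lra. }
  assert (Hx01 : forall i, (1 <= i <= r)%nat -> forall j, 0 <= eta * gamma j * lambda i <= 1).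
  { intros i Hi j. pose proof (Hle1 i Hi). pose proof (Hgt0 i Hi).
    pose proof (hstep j). pose proof (hgamma j).
    assert (0 < eta * gamma j) by (apply Rmult_lt_0_compat; lra).
    split; [nra|]. assert (eta * gamma j * lambda i <= eta * gamma j * lambda 1%nat)
      by (apply Rmult_le_compat_l; lra). lra. }
  assert (HA : forall (t i : nat), (1 <= i)%nat -> (i < r)%nat ->
      P i t < a1 -> P (S i) t < a2).
  { intros t i Hi Hir HPi. unfold P, Pfun in *.
    set (x := fun j => eta * gamma j * lambda i).
    set (y := fun j => eta * gamma j * lambda (S i)).
    assert (Hx : forall j, 0 <= x j <= 1) by (intro; apply Hx01; lia).
    assert (Hy : forall j, 0 <= y j <= 1) by (intro; apply Hx01; lia).
    pose proof (prod_weier x t Hx) as W. fold x in HPi.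
    pose proof (prod_exp y t Hy) as E. change (prodR (fun j => 1 - y j) t < a2).
    assert (Hxy : forall j, x j * / chi <= y j).
    { intro j. unfold x, y. pose proof (hratio i Hi Hir). pose proof (hgamma j).
      assert (0 < eta * gamma j) by (apply Rmult_lt_0_compat; lra).
      assert (0 < / chi) by (apply Rinv_0_lt_compat; lra).
      assert (L : lambda i * / chi <= lambda (S i)).
      { apply (Rmult_le_reg_r chi); [lra|]. rewrite Rmult_assoc, Rinv_l by lra. lra. }
      replace (eta * gamma j * lambda i * / chi) with (eta * gamma j * (lambda i * / chi)) by ring.
      apply Rmult_le_compat_l; lra. }
    pose proof (sum_le _ _ t Hxy) as S. rewrite sum_scal in S.
    apply (Rle_lt_trans _ _ _ E). unfold a2. apply exp_increasing.
    unfold Rdiv. assert (0 < / chi) by (apply Rinv_0_lt_compat; lra).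
    assert (sumR x t * / chi > (1 - a1) * / chi) by (apply Rmult_lt_compat_r; [lra|]; change (prodR (fun j => 1 - x j) t < a1) in HPi; lra).
    lra. }
  assert (HB : forall t : nat, P 1%nat t < a2 -> a1 <= P r t ->
      exists i : nat, (1 <= i <= r)%nat /\ a1 <= P i t <= a2).
  { intros t H1 Hr.
    assert (G : forall k, (1 <= k <= r)%nat -> a1 <= P k t ->
              exists i, (1 <= i <= r)%nat /\ a1 <= P i t <= a2).
    { induction k as [|k IH]; intros Hk HPk; [lia|].
      destruct (Nat.eq_dec k 0) as [->|Hk0].
      - exists 1%nat; split; [lia|lra].
      - destruct (Rlt_le_dec (P k t) a1) as [Hl|Hl].
        + exists (S k); split; [lia|]. split; [lra|].
          left; apply HA; [lia|lia|exact Hl].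
        + apply IH; [lia|exact Hl]. }
    apply (G r); [lia|exact Hr]. }
  split; [exact HA|]. split; [exact HB|].
  intros t1 t2 [H1 _] [_ H2] t Ht1 Ht2. apply HB.
  - replace t with (t1 + (t - t1))%nat by lia.
    eapply Rle_lt_trans; [|exact H1]. unfold P, Pfun.
    apply (prod_mono (fun j => eta * gamma j * lambda 1%nat)). apply Hx01; lia.
  - apply H2; exact Ht2.
Qed.
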